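(* In any finite ELP, if $\mu$ is an optimal policy, then the Lagrangian $\mathcal L_\mu$ with conjugate policy $\mu$ satisfies $$\min_{Q\in\mathcal Q}\max_{\lambda\ge0}\mathcal L_\mu(Q,\lambda)=\max_{\lambda\ge0}\min_{Q\in\mathcal Q}\mathcal L_\mu(Q,\lambda)=J(\mu).$$
   Context: A finite ELP is $(\mathcal S,\mathcal A,P,R,\rho)$ with finite $\mathcal S,\mathcal A$, reward $R:\mathcal S\to\mathbb R$, transitions $P(s'|s,a)$, distribution $\rho$, and nonempty terminal set $\mathcal S_\bot$. Under a policy $\pi$, $S_0$ is a fixed terminal state, $A_t\sim\pi(\cdot|S_t)$, $S_{t+1}\sim P(\cdot|S_t,A_t)$, and $T=\inf\{t\ge1:S_t\in\mathcal S_\bot\}$. ELP conditions: $\mathbb E_\pi[T]<\infty$ for every $\pi$; $P(s'|s,a)=\rho(s')$ for all $s\in\mathcal S_\bot$, all $a,s'$; every state is reachable under some policy. $J(\pi)=\mathbb E_\pi[\sum_{t=1}^TR(S_t)]$; $\mu$ optimal means $J(\mu)=\max_\pi J(\pi)$. $\mathcal Q$ = all functions $\mathcal S\times\mathcal A\to\mathbb R$; $\lambda\ge0$ ranges over functions $\mathcal S\times\mathcal A\to[0,\infty)$. $\mathcal BQ(s,a)=\sum_{s'}P(s'|s,a)\big(R(s')+\mathbf 1[s'\notin\mathcal S_\bot]\max_{a'}Q(s',a')\big)$. $\mathcal L_\pi(Q,\lambda)=\mathbb E_\pi[Q(S_T,A_T)]+\sum_{s,a}\lambda(s,a)(\mathcal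 BQ(s,a)-Q(s,a))$ with $A_T\sim\pi(\cdot|S_T)$. *)

(* Defs.v *)
From HB Require Import structures.
From mathcomp Require Import all_boot all_order all_algebra.
From mathcomp Require Import all_classical all_reals all_analysis.
Set Implicit Arguments. Unset Strict Implicit. Unset Printing Implicit Defensive.
Import Order.TTheory GRing.Theory Num.Theory.
Import numFieldNormedType.Exports.
Local Open Scope classical_set_scope.
Local Open Scope ring_scope.

Section ELP.
Variables (R : realType) (S A : finType).
(* transition kernel P s a s' = P(s' | s, a) *)
Variable (P : S -> A -> S -> R).
Variable (rew : S -> R).
Variable (rho : S -> R).
(* terminal set S_bot and the fixed initial terminal state S_0 *)
Variable (term : {set S}) (s0 : S).

Definition is_policy (pi : S -> A -> R) : Prop :=
  (forall s a, 0 <= pi s a) /\ (forall s, \sum_(a : A) pi s a = 1).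

(* occ pi n s = Pr_pi(S_{n+1} = s, T >= n+1), i.e. S_1,...,S_n are all non-terminal. *)
Fixpoint occ (pi : S -> A -> R) (n : nat) : S -> R :=
  match n with
  | 0 => fun s' => \sum_(a : A) pi s0 a * P s0 a s'
  | m.+1 => fun s' =>
      \sum_(s : S | s \notin term) occ pi m s * \sum_(a : A) pi s a * P s a s'
  end.

(* E_pi[T] = sum_{t>=1} Pr(T >= t) : we require convergence of this series *)
Definition finite_expected_T (pi : S -> A -> R) : Prop :=
  cvgn (series (fun n => \sum_(s : S) occ pi n s)).

(* J(pi) = E_pi[ sum_{t=1}^T R(S_t) ] = sum_{t>=1} E[R(S_t) 1{T >= t}] *)
Definition J (pi : S -> A -> R) : R :=
  limn (series (fun n => \sum_(s : S) occ pi n s * rew s)).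

(* E_pi[Q(S_T, A_T)], A_T ~ pi(.|S_T) : Pr(T = n+1, S_T = s) = occ pi n s for s terminal *)
Definition Eterm (pi : S -> A -> R) (Q : S -> A -> R) : R :=
  limn (series (fun n =>
    \sum_(s in term) occ pi n s * \sum_(a : A) pi s a * Q s a)).

Definition maxQ (Q : S -> A -> R) (s : S) : R :=
  fine (\big[maxe/-oo%E]_(a : A) (Q s a)%:E).

Definition bellman (Q : S -> A -> R) (s : S) (a : A) : R :=
  \sum_(s' : S) P s a s' *
     (rew s' + (if s' \in term then 0 else maxQ Q s')).

Definition lagrangian (pi : S -> A -> R) (Q lam : S -> A -> R) : R :=
  Eterm pi Q + \sum_(s : S) \sum_(a : A) lam s a * (bellman Q s a - Q s a).

Definition nonneg_mult (lam : S -> A -> R) : Prop := forall s a, 0 <= lam s a.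

Definition sup_lam (pi : S -> A -> R) (Q : S -> A -> R) : \bar R :=
  ereal_sup [set (lagrangian pi Q lam)%:E | lam in nonneg_mult].

Definition inf_Q (pi : S -> A -> R) (lam : S -> A -> R) : \bar R :=
  ereal_inf [set (lagrangian pi Q lam)%:E | Q in [set: S -> A -> R]].

Definition is_finite_ELP : Prop :=
  [/\
      (forall s a s', 0 <= P s a s') /\ (forall s a, \sum_(s' : S) P s a s' = 1),
      (forall s, 0 <= rho s) /\ \sum_(s : S) rho s = 1,
      term != finset.set0 /\ s0 \in term,
      (forall pi, is_policy pi -> finite_expected_T pi) &
      (forall s a s', s \in term -> P s a s' = rho s') /\
      (forall s, exists pi, is_policy pi /\ exists n, 0 < occ pi n s)].

Definition is_optimal (mu : S -> A -> R) : Prop :=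
  is_policy mu /\ forall pi, is_policy pi -> J pi <= J mu.

End ELP.

(* Main.v *)
Require Import Defs.
From HB Require Import structures.
From mathcomp Require Import all_boot all_order all_algebra.
From mathcomp Require Import all_classical all_reals all_analysis.
From mathcomp Require Import ring lra.
Import Order.TTheory GRing.Theory Num.Theory.
Import numFieldNormedType.Exports.
Local Open Scope classical_set_scope.
Local Open Scope ring_scope.


Section Main.
Variables (R : realType) (S A : finType) (P : S -> A -> S -> R) (rew rho : S -> R)
  (term : {set S}) (s0 : S).
Hypothesis HP0 : forall s a s', 0 <= P s a s'.
Hypothesis HP1 : forall s a, \sum_s' P s a s' = 1.
Hypothesis Hs0 : s0 \in term.
Hypothesis Hfin : forall pi, is_policy pi -> finite_expected_T P term s0 pi.
Hypothesis Hrest : forall s a s', s \in term -> P s a s' = rho s'.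
Hypothesis Hreach : forall s, exists pi, is_policy pi /\ exists n, 0 < occ P term s0 pi n s.

Definition K (pi : S -> A -> R) s s' := \sum_a pi s a * P s a s'.
Local Notation occ := (occ P term s0).

Section Pol.
Variables (pi : S -> A -> R) (hpi : is_policy pi).

Lemma K_ge0 s s' : 0 <= K pi s s'.
Proof. by apply: sumr_ge0 => a _; apply: mulr_ge0; [case: hpi|]. Qed.

Lemma K_sum1 s : \sum_s' K pi s s' = 1.
Proof.
rewrite /K exchange_big /=; rewrite -(proj2 hpi s); apply: eq_bigr => a _.
by rewrite -mulr_sumr HP1 mulr1.
Qed.

Lemma K_term s s' : s \in term -> K pi s s' = rho s'.
Proof.
move=> hs; rewrite /K; under eq_bigr do rewrite Hrest //.
by rewrite -mulr_suml (proj2 hpi s) mul1r.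
Qed.

Lemma occ_ge0 n s : 0 <= occ pi n s.
Proof.
elim: n s => [|n IH] s /=; first exact: K_ge0.
by apply: sumr_ge0 => y _; apply: mulr_ge0 => //; exact: K_ge0.
Qed.

Lemma occSE n s' : occ pi n.+1 s' = \sum_(s | s \notin term) occ pi n s * K pi s s'.
Proof. by []. Qed.

Lemma occ0E s' : occ pi 0 s' = K pi s0 s'.
Proof. by []. Qed.

Definition Dm s := limn (series (fun n => occ pi n s)).

Lemma cvg_occ s : cvgn (series (fun n => occ pi n s)).
Proof.
apply: (@series_le_cvg _ _ (fun n => \sum_s occ pi n s)).
- by move=> n; exact: occ_ge0.
- by move=> n; apply: sumr_ge0 => *; exact: occ_ge0.
- by move=> n; rewrite (bigD1 s) //= lerDl; apply: sumr_ge0 => *; exact: occ_ge0.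
exact: Hfin.
Qed.

Lemma cvg_fsum (I : finType) (Pr : pred I) (u : I -> nat -> R) (l : I -> R) :
  (forall i, u i n @[n --> \oo] --> l i) ->
  (\sum_(i | Pr i) u i n) @[n --> \oo] --> \sum_(i | Pr i) l i.
Proof.
move=> hu; apply: (@cvg_big _ _ +%R 0 Pr) => //.
exact: add_continuous.
Qed.

Lemma cvg_wsum (Pr : pred S) (X : S -> R) :
  (\sum_(s | Pr s) series (fun k => occ pi k s) n * X s) @[n --> \oo]
   --> \sum_(s | Pr s) Dm s * X s.
Proof.
apply: cvg_fsum => s; apply: cvgMl; exact: (cvg_occ s).
Qed.

Lemma series_wsum (Pr : pred S) (X : S -> R) n :
  series (fun n => \sum_(s | Pr s) occ pi n s * X s) n =
  \sum_(s | Pr s) series (fun k => occ pi k s) n * X s.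
Proof.
rewrite /series /= exchange_big /=; apply: eq_bigr => s _.
by rewrite mulr_suml.
Qed.

Lemma lim_wsum (Pr : pred S) (X : S -> R) :
  series (fun n => \sum_(s | Pr s) occ pi n s * X s) @ \oo
   --> \sum_(s | Pr s) Dm s * X s.
Proof.
have -> : series (fun n => \sum_(s | Pr s) occ pi n s * X s) =
  (fun n => \sum_(s | Pr s) series (fun k => occ pi k s) n * X s).
  by apply: funext => n; rewrite series_wsum.
exact: cvg_wsum.
Qed.

Lemma flow s' : Dm s' = K pi s0 s' + \sum_(s | s \notin term) Dm s * K pi s s'.
Proof.
have h : (fun n => series (fun k => occ pi k s') n.+1) =
  (fun n => K pi s0 s' + \sum_(s | s \notin term) series (fun k => occ pi k s) n * K pi s s').
  apply: funext => n; rewrite /series /= big_nat_recl //=; congr (_ + _).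
  rewrite -/(series _ n); rewrite -series_wsum /series /=.
  by apply: eq_bigr.
rewrite /Dm; apply: cvg_lim => //.
rewrite -cvg_shiftS /= h.
apply: cvgD; first exact: cvg_cst.
exact: cvg_wsum.
Qed.


Lemma Dm_ge0 s : 0 <= Dm s.
Proof.
apply: limr_ge; first exact: cvg_occ.
by near=> n; apply: sumr_ge0 => k _; exact: occ_ge0.
Unshelve. all: by end_near.
Qed.

Lemma sum_term_Dm : \sum_(s in term) Dm s = 1.
Proof.
have h : \sum_s' Dm s' = 1 + \sum_(s | s \notin term) Dm s.
  under eq_bigr do rewrite flow.
  rewrite big_split /= K_sum1; congr (_ + _).
  rewrite exchange_big /=; apply: eq_bigr => s _.
  by rewrite -mulr_sumr K_sum1 mulr1.
by move: h; rewrite (bigID (fun s => s \in term)) /= => /addIr.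
Qed.

Lemma stat (W : S -> R) :
  \sum_s Dm s * (\sum_s' K pi s s' * W s') = \sum_s Dm s * W s.
Proof.
rewrite (bigID (fun s => s \in term)) /=.
have -> : \sum_(s in term) Dm s * (\sum_s' K pi s s' * W s') =
   \sum_s' K pi s0 s' * W s'.
  transitivity (\sum_(s in term) Dm s * (\sum_s' K pi s0 s' * W s')).
    by apply: eq_bigr => s hs; congr (_ * _); apply: eq_bigr => s' _; rewrite !K_term.
  by rewrite -mulr_suml sum_term_Dm mul1r.
have -> : \sum_(s | s \notin term) Dm s * (\sum_s' K pi s s' * W s') =
   \sum_s' (\sum_(s | s \notin term) Dm s * K pi s s') * W s'.
  under eq_bigr do rewrite mulr_sumr.
  rewrite exchange_big /=; apply: eq_bigr => s' _; rewrite mulr_suml.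
  by apply: eq_bigr => s _; rewrite mulrA.
rewrite -big_split /=; apply: eq_bigr => s' _.
by rewrite -mulrDl -flow.
Qed.

Lemma J_Dm : J P rew term s0 pi = \sum_s Dm s * rew s.
Proof. by apply: cvg_lim => //; exact: (lim_wsum predT rew). Qed.

Lemma Eterm_Dm Q : Eterm P term s0 pi Q =
  \sum_(s in term) Dm s * (\sum_a pi s a * Q s a).
Proof. by apply: cvg_lim => //; exact: (lim_wsum (fun s => s \in term)). Qed.

End Pol.
Arguments K_ge0 [pi] hpi s s'.
Arguments K_sum1 [pi] hpi s.
Arguments K_term [pi] hpi s s'.
Arguments occ_ge0 [pi] hpi n s.
Arguments occSE [pi] n s'.
Arguments occ0E [pi] s'.
Arguments Dm_ge0 [pi] hpi s.
Arguments sum_term_Dm [pi] hpi.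
Arguments stat [pi] hpi W.
Arguments J_Dm [pi] hpi.
Arguments Eterm_Dm [pi] hpi Q.
Arguments flow [pi] hpi s'.


Lemma sum_pos_ex (I : finType) (Pr : pred I) (f : I -> R) :
  0 < \sum_(i | Pr i) f i -> exists2 i, Pr i & 0 < f i.
Proof.
move=> h; case: (pselect (exists2 i, Pr i & 0 < f i)) => // hn; exfalso.
have : \sum_(i | Pr i) f i <= 0.
  apply: sumr_le0 => i Pi; rewrite leNgt; apply/negP => fi; apply: hn; by exists i.
by rewrite leNgt h.
Qed.

Lemma prod_pos [a b : R] : 0 <= a -> 0 <= b -> 0 < a * b -> 0 < a /\ 0 < b.
Proof.
rewrite !le_eqVlt => /orP[/eqP <-|ha]; first by rewrite mul0r ltxx.
move=> /orP[/eqP <-|hb]; first by rewrite mulr0 ltxx.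
by [].
Qed.

Lemma sum_ge_term (I : finType) (Pr : pred I) (f : I -> R) j :
  Pr j -> (forall i, Pr i -> 0 <= f i) -> f j <= \sum_(i | Pr i) f i.
Proof.
move=> Pj hf; rewrite (bigD1 j) //= lerDl; apply: sumr_ge0 => i /andP[Pi _].
exact: hf.
Qed.

Lemma notrap pi (hpi : is_policy pi) (C : {set S}) c :
  c \in C -> (forall s, s \in C -> s \notin term) ->
  (forall x s, x \in C -> 0 < K pi x s -> s \in C) -> False.
Proof.
move=> cC Cnt Ccl.
have [pi' [hpi' [n0 hn0]]] := Hreach c.
pose pi2 := fun s a => if s \in C then pi s a else pi' s a.
have hpi2 : is_policy pi2.
  split=> [s a|s]; rewrite /pi2; case: (s \in C).
  - by case: hpi.
  - by case: hpi'.
  - by case: hpi.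
  - by case: hpi'.
have K2 : forall s s', K pi2 s s' = if s \in C then K pi s s' else K pi' s s'.
  by move=> s s'; rewrite /K /pi2; case: (s \in C).
pose F n := \sum_(z in C) occ pi2 n z.
have e1 : forall y, y \in C -> \sum_(z in C) K pi y z = 1.
  move=> y yC; rewrite -(K_sum1 hpi y) [RHS](bigID (fun z => z \in C)) /=.
  rewrite [X in _ = _ + X]big1 ?addr0 // => z zC.
  have := K_ge0 hpi y z; rewrite le_eqVlt => /orP[/eqP <- //|/(Ccl _ _ yC)].
  by rewrite (negbTE zC).
have Fmono : forall n, F n <= F n.+1.
  move=> n; rewrite /F.
  apply: (@le_trans _ _ (\sum_(z in C) \sum_(y in C) occ pi2 n y * K pi2 y z)).
    rewrite exchange_big /=; apply: ler_sum => y yC; rewrite -mulr_sumr.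
    under eq_bigr do rewrite K2 yC.
    by rewrite e1 // mulr1.
  apply: ler_sum => z _; rewrite occSE.
  rewrite [X in _ <= X](bigID (fun y => y \in C)) /=.
  rewrite -[X in X <= _]addr0; apply: lerD.
    rewrite [X in _ <= X](eq_bigl (fun y => y \in C)); first exact: lexx.
    by move=> y; case yC: (y \in C); [rewrite Cnt | rewrite andbF].
  by apply: sumr_ge0 => y _; apply: mulr_ge0; [exact: occ_ge0 | exact: K_ge0].
have Fmono2 : forall n m, (n <= m)%N -> F n <= F m.
  move=> n m /subnK <-; elim: (m - n)%N => [|k IH]; first by rewrite add0n.
  by rewrite addSn; exact: le_trans IH (Fmono _).
have claim : forall n s, 0 < occ pi' n s -> 0 < occ pi2 n s \/ 0 < F n.
  elim=> [|n IH] s.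
    rewrite !occ0E K2 ifF; first by left.
    by apply/negbTE/negP => /Cnt; rewrite Hs0.
  rewrite occSE => /sum_pos_ex [y ynt hy].
  have [hy1 hy2] := prod_pos (occ_ge0 hpi' n y) (K_ge0 hpi' y s) hy.
  case: (IH y hy1) => [h2|hF]; last by right; exact: lt_le_trans hF (Fmono n).
  case yC: (y \in C).
    right; apply: (lt_le_trans _ (Fmono n)); apply: (lt_le_trans h2).
    by apply: sum_ge_term => // *; exact: occ_ge0.
  left; rewrite occSE; apply: (@lt_le_trans _ _ (occ pi2 n y * K pi2 y s)).
    by rewrite K2 yC; exact: mulr_gt0.
  by apply: sum_ge_term => // *; apply: mulr_ge0; [exact: occ_ge0|exact: K_ge0].
have hF : 0 < F n0.
  case: (claim n0 c hn0) => // h; apply: (lt_le_trans h).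
  by apply: sum_ge_term => // *; exact: occ_ge0.
have := cvgr0_norm_lt _ (cvg_series_cvg_0 (Hfin _ hpi2)) _ hF.
move=> [N _ /(_ (maxn N n0) (leq_maxl _ _))] /=.
apply/negP; rewrite -leNgt; apply: le_trans (ler_norm _).
apply: (le_trans (Fmono2 _ _ (leq_maxr N n0))).
rewrite /F [X in _ <= X](bigID (fun s => s \in C)) /= lerDl.
by apply: sumr_ge0 => *; exact: occ_ge0.
Qed.


Lemma maxprin pi (hpi : is_policy pi) (g h : S -> R) :
  (forall y, y \notin term -> 0 <= g y) ->
  (forall y, y \notin term -> h y = g y + \sum_(s | s \notin term) K pi y s * h s) ->
  forall y, y \notin term -> 0 <= h y.
Proof.
move=> hg hh y yn; rewrite leNgt; apply/negP => hy.
pose z := [arg min_(z < y | z \notin term) h z]%O.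
have [zn zmin] : z \notin term /\ forall s, s \notin term -> h z <= h s.
  by rewrite /z; case: arg_minP => // i Pi Hi; split=> // s /Hi.
have hz : h z < 0 := le_lt_trans (zmin y yn) hy.
pose C : {set S} := [set s | (s \notin term) && (h s == h z)]%SET.
apply: (@notrap pi hpi C z).
- by rewrite inE zn eqxx.
- by move=> s; rewrite inE => /andP[].
move=> x s; rewrite inE => /andP[xn /eqP hx] hK.
set m := h z in hz hx zmin.
pose sig := \sum_(s | s \notin term) K pi x s.
pose E := \sum_(s | s \notin term) K pi x s * (h s - m).
have hsplit : \sum_s K pi x s = \sum_(s in term) K pi x s + sig.
  by rewrite (bigID (fun s => s \in term)).
have sig1 : sig <= 1.
  rewrite -(K_sum1 hpi x) hsplit lerDr; apply: sumr_ge0 => *; exact: K_ge0.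
have eq1 : \sum_(s | s \notin term) K pi x s * h s = m * sig + E.
  rewrite /E /sig mulr_sumr -big_split /=; apply: eq_bigr => s' _; ring.
have E0 : 0 <= E.
  apply: sumr_ge0 => s' s'n; apply: mulr_ge0; first exact: K_ge0.
  by rewrite subr_ge0; exact: zmin.
have := hh x xn; rewrite hx eq1 => hm.
have gx := hg x xn.
have [hms hE] : m * sig = m /\ E = 0 by split; nra.
have hsig : sig = 1.
  by apply: (mulfI (ltr0_neq0 hz)); rewrite mulr1.
case sn: (s \in term).
  exfalso; move: (K_sum1 hpi x); rewrite hsplit hsig.
  have : K pi x s <= \sum_(s in term) K pi x s.
    by apply: sum_ge_term => // *; exact: K_ge0.
  move=> h1 h2; have h3 : \sum_(s in term) K pi x s = 0 by lra.
  by move: hK; rewrite ltNge; move/negP; apply; rewrite -h3.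
rewrite inE sn /=; apply/eqP.
have hnn : forall i, i \notin term -> 0 <= K pi x i * (h i - m).
  move=> s' s'n; apply: mulr_ge0; first exact: K_ge0.
  by rewrite subr_ge0; exact: zmin.
have := psumr_eq0P hnn hE (i := s); rewrite sn => /(_ isT) /eqP.
rewrite mulf_eq0 => /orP[/eqP hK0|]; first by move: hK; rewrite hK0 ltxx.
by rewrite subr_eq0 => /eqP.
Qed.


Lemma sum_enum (G : 'I_#|S| -> R) : \sum_j G j = \sum_s G (enum_rank s).
Proof.
by rewrite (reindex enum_rank) //; exists enum_val => i _;
  [exact: enum_rankK | exact: enum_valK].
Qed.

Section Sol.
Variables (pi : S -> A -> R) (hpi : is_policy pi).

Definition Mx : 'M[R]_#|S| := \matrix_(i, j) ((i == j)%:R -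
  (if (enum_val i \notin term) && (enum_val j \notin term)
   then K pi (enum_val i) (enum_val j) else 0)).

Lemma rowsum (w : 'I_#|S| -> R) y : \sum_j Mx (enum_rank y) j * w j =
  w (enum_rank y) - (if y \notin term then
     \sum_(s | s \notin term) K pi y s * w (enum_rank s) else 0).
Proof.
rewrite sum_enum; under eq_bigr do rewrite mxE !enum_rankK.
under eq_bigr do rewrite mulrBl.
rewrite sumrB; congr (_ - _).
  rewrite (bigD1 y) //= eqxx mul1r big1 ?addr0 // => s /negbTE ne.
  by rewrite (inj_eq enum_rank_inj) eq_sym ne mul0r.
case: ifP => yt /=.
  rewrite [RHS]big_mkcond /=; apply: eq_bigr => s _.
  by case: ifP => //; rewrite mul0r.
by rewrite big1 // => s _; rewrite mul0r.
Qed.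

Lemma detMx : \det Mx != 0.
Proof.
rewrite -det_tr; apply/negP => /det0P [v vn0 hv].
pose h s : R := v 0 (enum_rank s).
have eqh : forall y, h y = (if y \notin term then
     \sum_(s | s \notin term) K pi y s * h s else 0).
  move=> y; apply/eqP; rewrite -subr_eq0; apply/eqP.
  have := congr1 (fun M : 'M[R]_(1, #|S|) => M 0 (enum_rank y)) hv; rewrite !mxE => e.
  have r := rowsum (v 0) y.
  rewrite /h -r; apply: eq_trans e.
  by apply: eq_bigr => j _; rewrite [in RHS]mxE mulrC.
have h0 : forall y, y \notin term -> 0 <= h y.
  apply: (@maxprin pi hpi (fun _ => 0) h) => // y yn.
  by rewrite add0r eqh yn.
have h0' : forall y, y \notin term -> 0 <= - h y.
  apply: (@maxprin pi hpi (fun _ => 0) (fun s => - h s)) => // y yn.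
  rewrite add0r eqh yn -sumrN; apply: eq_bigr => s _; by rewrite mulrN.
move/eqP: vn0; apply; apply/rowP => j; rewrite mxE.
have -> : j = enum_rank (enum_val j) by rewrite enum_valK.
rewrite -/(h _); case: (boolP (enum_val j \in term)) => hj.
  by rewrite eqh hj.
by apply/eqP; rewrite eq_le h0 //= -oppr_ge0 h0'.
Qed.

Lemma exsol (b : S -> R) : exists h : S -> R, forall y, y \notin term ->
  h y = b y + \sum_(s | s \notin term) K pi y s * h s.
Proof.
have hu : Mx \in unitmx by rewrite unitmxE unitfE detMx.
pose bc : 'cV[R]_#|S| := \col_i b (enum_val i).
pose x := invmx Mx *m bc.
have hx := mulKVmx hu bc.
exists (fun s => x (enum_rank s) 0) => y yn.
have := congr1 (fun M : 'cV[R]_#|S| => M (enum_rank y) 0) hx.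
rewrite mxE [in RHS]mxE enum_rankK => e.
have r := rowsum (fun j => x j 0) y; rewrite yn /= in r.
by rewrite -e r subrK.
Qed.
End Sol.
Arguments exsol [pi] hpi b.


Section Greedy.
Variable a0 : A.

Lemma maxQ_ex (Q : S -> A -> R) s :
  exists a, maxQ Q s = Q s a /\ forall a', Q s a' <= Q s a.
Proof.
have hb : forall i, predT i -> (-oo <= (Q s i)%:E)%E by move=> i _; exact: leNye.
case: (@eq_bigmax _ _ _ -oo%E a0 predT (fun a => (Q s a)%:E) isT hb) => i0 _ hi.
exists i0; split; first by rewrite /maxQ hi.
move=> a'; rewrite -lee_fin -hi.
exact: (le_bigmax -oo%E (fun a => (Q s a)%:E) a').
Qed.

Lemma maxQ_ge (Q : S -> A -> R) s a : Q s a <= maxQ Q s.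
Proof. by have [i [-> h]] := maxQ_ex Q s; exact: h. Qed.

Definition pif (f : {ffun S -> A}) : S -> A -> R := fun s a => (a == f s)%:R.

Lemma pif_pol f : is_policy (pif f).
Proof.
split=> [s a|s]; first by rewrite /pif ler0n.
rewrite /pif (bigD1 (f s)) //= eqxx big1 ?addr0 // => a /negbTE ->.
by [].
Qed.

Lemma K_pif f y s : K (pif f) y s = P y (f y) s.
Proof.
rewrite /K /pif (bigD1 (f y)) //= eqxx mul1r big1 ?addr0 // => a /negbTE ->.
by rewrite mul0r.
Qed.

Definition QV (V : S -> R) s a :=
  \sum_s' P s a s' * (rew s' + (if s' \in term then 0 else V s')).

Lemma QV_split V s a : QV V s a =
  \sum_s' P s a s' * rew s' + \sum_(s' | s' \notin term) P s a s' * V s'.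
Proof.
rewrite /QV [X in _ = _ + X]big_mkcond /= -big_split /=.
apply: eq_bigr => s' _; rewrite mulrDr; congr (_ + _).
by case: (s' \in term) => /=; rewrite ?mulr0.
Qed.

Lemma Vex (f : {ffun S -> A}) : exists V : S -> R, forall y, y \notin term -> V y = QV V y (f y).
Proof.
have [h hh] := exsol (pif_pol f) (fun y => \sum_s' P y (f y) s' * rew s').
exists h => y yn; rewrite hh // QV_split; congr (_ + _).
by apply: eq_bigr => s _; rewrite K_pif.
Qed.

Definition Vd (f : {ffun S -> A}) := projT1 (cid (Vex f)).
Lemma Vd_eq (f : {ffun S -> A}) y : y \notin term -> Vd f y = QV (Vd f) y (f y).
Proof. exact: (projT2 (cid (Vex f))). Qed.

Definition Phi (f : {ffun S -> A}) := \sum_(y | y \notin term) Vd f y.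
Definition fstar := [arg max_(f > [ffun=> a0]) Phi f]%O.

Lemma fstar_max (f : {ffun S -> A}) : Phi f <= Phi fstar.
Proof. by rewrite /fstar; case: arg_maxP => // i _ Hi; exact: Hi. Qed.

Lemma greedy y a : y \notin term -> QV (Vd fstar) y a <= Vd fstar y.
Proof.
move=> yn; rewrite leNgt; apply/negP => hgt.
set V := Vd fstar in hgt *.
pose f' := [ffun s => if s == y then a else fstar s].
pose D s := Vd f' s - V s.
pose g s := QV V s (f' s) - V s.
have hg : forall s, s \notin term -> 0 <= g s.
  move=> s sn; rewrite /g /f' ffunE; case: eqP => [->|_].
    by rewrite subr_ge0 ltW.
  by rewrite /V -Vd_eq // subrr.
have hD : forall s, s \notin term ->
    D s = g s + \sum_(x | x \notin term) K (pif f') s x * D x.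
  move=> s sn; rewrite /D /g Vd_eq // !QV_split.
  under [X in _ = _ + X]eq_bigr do rewrite K_pif mulrBr.
  rewrite sumrB; ring.
have D0 := @maxprin _ (pif_pol f') g D hg hD.
have Dy : 0 < D y.
  rewrite hD //; apply: (lt_le_trans (_ : 0 < g y)); last first.
    rewrite lerDl; apply: sumr_ge0 => x xn; apply: mulr_ge0; first exact: K_ge0 (pif_pol f') _ _.
    exact: D0.
  by rewrite /g /f' ffunE eqxx subr_gt0.
have : Phi fstar < Phi f'.
  rewrite -subr_gt0 /Phi -sumrB; apply: (lt_le_trans Dy).
  by apply: sum_ge_term => // x xn; exact: D0.
by rewrite ltNge fstar_max.
Qed.


End Greedy.

Section Final.
Variable a0 : A.
Variables (mu : S -> A -> R) (hmu : is_policy mu)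
  (hopt : forall pi, is_policy pi -> J P rew term s0 pi <= J P rew term s0 mu).

Definition lamd s a := mu s a * Dm mu s.

Lemma lamd_nn : nonneg_mult lamd.
Proof. by move=> s a; apply: mulr_ge0; [case: hmu | exact: Dm_ge0]. Qed.

Lemma WD Q : J P rew term s0 mu <= lagrangian P rew term s0 mu Q lamd.
Proof.
rewrite /lagrangian (Eterm_Dm hmu) (J_Dm hmu).
pose qmu s := \sum_a mu s a * Q s a.
pose W s := rew s + (if s \in term then 0 else qmu s).
have hq : forall s, qmu s <= maxQ Q s.
  move=> s; rewrite /qmu -[maxQ Q s]mul1r -(proj2 hmu s) mulr_suml.
  apply: ler_sum => a _; apply: ler_wpM2l; first by case: hmu.
  exact: (maxQ_ge a0 Q s a).
have hB : forall s a, \sum_s' P s a s' * W s' <= bellman P rew term Q s a.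
  move=> s a; rewrite /bellman; apply: ler_sum => s' _.
  apply: ler_wpM2l; first exact: HP0.
  by rewrite lerD2l /W; case: ifP => // _; exact: hq.
have e1 : \sum_s Dm mu s * (\sum_s' K mu s s' * W s') =
    \sum_s Dm mu s * rew s + \sum_(s | s \notin term) Dm mu s * qmu s.
  rewrite (stat hmu) /W; under eq_bigr do rewrite mulrDr.
  rewrite big_split /=; congr (_ + _); rewrite [RHS]big_mkcond /=.
  by apply: eq_bigr => s _; case: (s \in term) => /=; rewrite ?mulr0.
have e2 : \sum_s Dm mu s * qmu s = \sum_(s in term) Dm mu s * qmu s +
    \sum_(s | s \notin term) Dm mu s * qmu s by rewrite (bigID (fun s => s \in term)).
have low : \sum_s Dm mu s * (\sum_s' K mu s s' * W s' - qmu s) <=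
    \sum_s \sum_a lamd s a * (bellman P rew term Q s a - Q s a).
  apply: ler_sum => s _.
  have -> : \sum_s' K mu s s' * W s' = \sum_a mu s a * \sum_s' P s a s' * W s'.
    rewrite /K; under eq_bigr do rewrite mulr_suml.
    rewrite exchange_big /=; apply: eq_bigr => a _; rewrite mulr_sumr.
    by apply: eq_bigr => s' _; rewrite mulrA.
  have -> : Dm mu s * (\sum_a mu s a * (\sum_s' P s a s' * W s') - qmu s) =
      \sum_a mu s a * Dm mu s * (\sum_s' P s a s' * W s' - Q s a).
    rewrite /qmu -sumrB mulr_sumr; apply: eq_bigr => a _; ring.
  apply: ler_sum => a _; apply: ler_wpM2l; first exact: lamd_nn.
  by rewrite lerD2r.
apply: (le_trans _ (lerD (lexx _) low)).
under [X in _ <= _ + X]eq_bigr do rewrite mulrBr.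
rewrite sumrB e1 e2 le_eqVlt; apply/orP; left; apply/eqP; rewrite /qmu /=; ring.
Qed.

Let V := Vd (fstar a0).
Let Q0 := QV V.

Lemma maxQ_Q0 s : s \notin term -> maxQ Q0 s = V s.
Proof.
move=> sn; have [i [-> hi]] := maxQ_ex a0 Q0 s.
apply/eqP; rewrite eq_le; apply/andP; split; first exact: greedy.
by rewrite /V Vd_eq //; exact: hi.
Qed.

Lemma bellQ0 s a : bellman P rew term Q0 s a = Q0 s a.
Proof.
rewrite /bellman /Q0 /QV; apply: eq_bigr => s' _; congr (_ * (_ + _)).
by case: ifP => // /negbT sn; rewrite maxQ_Q0.
Qed.

Lemma lagQ0 lam : lagrangian P rew term s0 mu Q0 lam = Eterm P term s0 mu Q0.
Proof.
rewrite /lagrangian big1 ?addr0 // => s _; rewrite big1 // => a _.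
by rewrite bellQ0 subrr mulr0.
Qed.

Let c := \sum_s' rho s' * (rew s' + (if s' \in term then 0 else V s')).

Lemma Q0_term s a : s \in term -> Q0 s a = c.
Proof. by move=> st; rewrite /Q0 /QV; apply: eq_bigr => s' _; rewrite Hrest. Qed.

Lemma Eterm_Q0 : Eterm P term s0 mu Q0 = c.
Proof.
rewrite (Eterm_Dm hmu).
transitivity (\sum_(s in term) Dm mu s * c).
  apply: eq_bigr => s st; congr (_ * _).
  under eq_bigr do rewrite Q0_term //.
  by rewrite -mulr_suml (proj2 hmu s) mul1r.
by rewrite -mulr_suml (sum_term_Dm hmu) mul1r.
Qed.

Lemma J_star : J P rew term s0 (pif (fstar a0)) = c.
Proof.
have hp := pif_pol (fstar a0).
pose W s := rew s + (if s \in term then 0 else V s).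
have hK : forall s, \sum_s' K (pif (fstar a0)) s s' * W s' =
    if s \in term then c else V s.
  move=> s; case: ifP => st.
    by apply: eq_bigr => s' _; rewrite (K_term hp).
  under eq_bigr do rewrite K_pif.
  by rewrite /V Vd_eq ?st.
have := stat hp W; under eq_bigr do rewrite hK.
have L : \sum_s Dm (pif (fstar a0)) s * (if s \in term then c else V s) =
    c + \sum_(s | s \notin term) Dm (pif (fstar a0)) s * V s.
  rewrite (bigID (fun s => s \in term)) /=; congr (_ + _).
    transitivity (\sum_(s in term) Dm (pif (fstar a0)) s * c).
      by apply: eq_bigr => s ->.
    by rewrite -mulr_suml (sum_term_Dm hp) mul1r.
  by apply: eq_bigr => s /negbTE ->.
have Rr : \sum_s Dm (pif (fstar a0)) s * W s = J P rew term s0 (pif (fstar a0)) +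
    \sum_(s | s \notin term) Dm (pif (fstar a0)) s * V s.
  rewrite (J_Dm hp) /W; under eq_bigr do rewrite mulrDr.
  rewrite big_split /=; congr (_ + _).
  rewrite [RHS]big_mkcond /=; apply: eq_bigr => s _.
  by case: (s \in term) => /=; rewrite ?mulr0.
by rewrite L Rr => /addIr.
Qed.

Lemma UB lam : lagrangian P rew term s0 mu Q0 lam = J P rew term s0 mu.
Proof.
rewrite lagQ0; apply/eqP; rewrite eq_le; apply/andP; split.
  by rewrite Eterm_Q0 -J_star; apply: hopt; exact: pif_pol.
by rewrite -(lagQ0 lamd); exact: WD.
Qed.

Lemma final :
  [/\ ereal_inf (range (sup_lam P rew term s0 mu)) = (J P rew term s0 mu)%:E,
      (exists Q : S -> A -> R,
         sup_lam P rew term s0 mu Q = (J P rew term s0 mu)%:E /\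
         exists lam, nonneg_mult lam /\
           lagrangian P rew term s0 mu Q lam = J P rew term s0 mu),
      ereal_sup [set inf_Q P rew term s0 mu lam | lam in @nonneg_mult R S A]
        = (J P rew term s0 mu)%:E &
      (exists lam, nonneg_mult lam /\
         inf_Q P rew term s0 mu lam = (J P rew term s0 mu)%:E /\
         exists Q, lagrangian P rew term s0 mu Q lam = J P rew term s0 mu)].
Proof.
set Jm := J P rew term s0 mu.
have supQ0 : sup_lam P rew term s0 mu Q0 = Jm%:E.
  apply/eqP; rewrite eq_le; apply/andP; split.
    by apply: ge_ereal_sup => _ [lam _ <-]; rewrite UB.
  by apply: ereal_sup_ubound; exists lamd; [exact: lamd_nn | rewrite UB].
have supge : forall Q, (Jm%:E <= sup_lam P rew term s0 mu Q)%E.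
  move=> Q; apply: (le_trans _ (ereal_sup_ubound _)); last first.
    by exists lamd; [exact: lamd_nn | reflexivity].
  by rewrite lee_fin; exact: WD.
have infl : inf_Q P rew term s0 mu lamd = Jm%:E.
  apply/eqP; rewrite eq_le; apply/andP; split.
    by apply: ereal_inf_lbound; exists Q0 => //; rewrite UB.
  by apply: le_ereal_inf_tmp => _ [Q _ <-]; rewrite lee_fin; exact: WD.
split.
- apply/eqP; rewrite eq_le; apply/andP; split.
    by apply: ereal_inf_lbound; exists Q0.
  by apply: le_ereal_inf_tmp => _ [Q _ <-]; exact: supge.
- exists Q0; split => //; exists lamd; split; [exact: lamd_nn | exact: UB].
- apply/eqP; rewrite eq_le; apply/andP; split.
    apply: ge_ereal_sup => _ [lam _ <-].
    by apply: ereal_inf_lbound; exists Q0 => //; rewrite UB.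
  by apply: ereal_sup_ubound; exists lamd; [exact: lamd_nn | exact: infl].
- exists lamd; split; first exact: lamd_nn.
  by split => //; exists Q0; exact: UB.
Qed.
End Final.

End Main.

Theorem mainTheorem6 (R : realType) (S A : finType)
  (P : S -> A -> S -> R) (rew : S -> R) (rho : S -> R)
  (term : {set S}) (s0 : S) (mu : S -> A -> R) :
  is_finite_ELP P rho term s0 ->
  is_optimal P rew term s0 mu ->
  [/\ (* min_Q max_{lam>=0} L_mu(Q,lam) = J(mu), with both extrema attained *)
      ereal_inf (range (sup_lam P rew term s0 mu)) = (J P rew term s0 mu)%:E,
      (exists Q : S -> A -> R,
         sup_lam P rew term s0 mu Q = (J P rew term s0 mu)%:E /\
         exists lam, nonneg_mult lam /\
           lagrangian P rew term s0 mu Q lam = J P rew term s0 mu),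
      (* max_{lam>=0} min_Q L_mu(Q,lam) = J(mu), with both extrema attained *)
      ereal_sup [set inf_Q P rew term s0 mu lam | lam in @nonneg_mult R S A]
        = (J P rew term s0 mu)%:E &
      (exists lam, nonneg_mult lam /\
         inf_Q P rew term s0 mu lam = (J P rew term s0 mu)%:E /\
         exists Q, lagrangian P rew term s0 mu Q lam = J P rew term s0 mu)].
Proof.
move=> [[HP0 HP1] _ [_ Hs0] Hfin [Hrest Hreach]] [hmu hopt].
have : 0 < \sum_a mu s0 a by rewrite (proj2 hmu s0) ltr01.
move/sum_pos_ex => [a0 _ _].
by apply: final; eassumption.
Qed.
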